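(* Let $q\in(0,1)$, $\beta<1$ real, $z\in\mathbb{C}\setminus\{0\}$ with $1+z^2\ne0$, and suppose $\beta(1+z^2)=q^2+z^2$. Then for all $n\in\mathbb{N}_0$, \[ p_n^{(q,\beta)}(z+z^{-1};q)=\frac{(q^2;q)_n}{z^n\left((q^2+z^2)/(1+z^2);q\right)_n}. \]
   Context: $(a;q)_n:=\prod_{j=0}^{n-1}(1-aq^j)$. The monic polynomials $p_n^{(\alpha,\beta)}(x;q)$ satisfy $p_{-1}=0$, $p_0=1$, $p_{n+1}(x)=xp_n(x)-\tilde\gamma_{n-1}\tilde\gamma_np_{n-1}(x)$ for $n\in\mathbb{N}_0$ with $\tilde\gamma_n=(1-\alpha q^n)/(1-\beta q^n)$; here $\alpha=q$. *)

(* Defs.v *)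
From mathcomp Require Import all_boot all_order all_algebra.
From mathcomp Require Import reals complex.
Set Implicit Arguments. Unset Strict Implicit. Unset Printing Implicit Defensive.
Import Order.TTheory GRing.Theory Num.Theory.
Local Open Scope ring_scope.

Definition qpoch {F : comRingType} (a q : F) (n : nat) : F :=
  \prod_(j < n) (1 - a * q ^+ j).

Definition gammat {F : fieldType} (alpha beta q : F) (n : int) : F :=
  (1 - alpha * q ^ n) / (1 - beta * q ^ n).

(* pair (p_{n-1}(x), p_n(x)) of the monic polynomials defined by
   p_{-1} = 0, p_0 = 1, p_{n+1} = x p_n - gamma~_{n-1} gamma~_n p_{n-1}. *)
Fixpoint pjac_pair {F : fieldType} (alpha beta q x : F) (n : nat) : F * F :=
  match n with
  | 0 => (0, 1)
  | m.+1 => let: (a, b) := pjac_pair alpha beta q x m in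
            (b, x * b - gammat alpha beta q (m%:Z - 1) * gammat alpha beta q m%:Z * a)
  end.

Definition pjac {F : fieldType} (alpha beta q x : F) (n : nat) : F :=
  (pjac_pair alpha beta q x n).2.

(* Main.v *)
Require Import Defs.
From mathcomp Require Import all_boot all_order all_algebra.
From mathcomp Require Import reals complex.
From mathcomp Require Import ring.
Import Order.TTheory GRing.Theory Num.Theory.
Local Open Scope ring_scope.
Local Open Scope complex_scope.

Lemma qpochS (F : comRingType) (a q : F) n :
  qpoch a q n.+1 = qpoch a q n * (1 - a * q ^+ n).
Proof. by rewrite /qpoch big_ord_recr. Qed.

Lemma step_id (F : fieldType) (z Q b u A B zn : F) :
  z != 0 -> zn != 0 -> B != 0 -> 1 - b*u != 0 -> 1 - b*(Q*u) != 0 ->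
  Q^+2 = b*(1+z^+2) - z^+2 ->
  (z + z^-1) * (A * (1 - Q^+2 * u) / (zn * z * (B * (1 - b * u))))
  - (1 - Q*u)/(1-b*u) * ((1-Q*(Q*u))/(1-b*(Q*u))) * (A / (zn * B))
  = A * (1 - Q^+2 * u) * (1 - Q^+2 * (Q*u)) /
      (zn * z * z * (B * (1 - b*u) * (1 - b * (Q*u)))).
Proof.
move=> z0 zn0 B0 h1 h2 hQ.
have e1 : Q*(Q*u) = Q^+2 * u by rewrite mulrA expr2.
have e2 : Q^+2 * (Q*u) = Q * (b*(1+z^+2) - z^+2) * u.
  by rewrite -hQ; rewrite mulrA [Q^+2 * Q]mulrC.
rewrite e1 e2 hQ.
field.
by rewrite z0 zn0 B0 h1 h2.
Qed.

Lemma pjac_pairS (F : fieldType) (al be q x : F) m :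
  pjac_pair al be q x m.+1 = let: (a, b) := pjac_pair al be q x m in
            (b, x * b - gammat al be q (m%:Z - 1) * gammat al be q m%:Z * a).
Proof. by []. Qed.

Theorem corollary2p19 (R : realType) (q beta : R) (z : R[i]) :
  0 < q < 1 -> beta < 1 -> z != 0 -> 1 + z ^+ 2 != 0 ->
  beta%:C * (1 + z ^+ 2) = q%:C ^+ 2 + z ^+ 2 ->
  forall n : nat,
    pjac q%:C beta%:C q%:C (z + z^-1) n =
    qpoch (q%:C ^+ 2) q%:C n /
      (z ^+ n * qpoch ((q%:C ^+ 2 + z ^+ 2) / (1 + z ^+ 2)) q%:C n).
Proof.
move=> /andP[q0 q1] b1 z0 z20 hb n.
have -> : (q%:C ^+ 2 + z ^+ 2) / (1 + z ^+ 2) = beta%:C.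
  by rewrite -hb mulfK.
set Q := q%:C; set b := beta%:C.
have hQ : Q^+2 = b*(1+z^+2) - z^+2 by rewrite hb addrK.
have nz k : 1 - b * Q^+k != 0.
  suff : (1 - beta * q ^+ k)%:C != 0.
    by rewrite rmorphB rmorph1 rmorphM rmorphXn.
  rewrite (_ : 0 = 0%:C) // (inj_eq (@complexI _)) subr_eq0.
  apply/negP => /eqP e.
  have : beta * q ^+ k < 1.
    case: (lerP beta 0) => hb0.
      by apply: (le_lt_trans _ ltr01); rewrite mulr_le0_ge0 // exprn_ge0 // ltW.
    apply: (le_lt_trans _ b1); rewrite ger_pMr // exprn_ile1 // ltW //.
  by rewrite -e ltxx.
have zn k : z ^+ k != 0 by rewrite expf_neq0.
have Bn k : qpoch b Q k != 0.
  by rewrite /qpoch; apply/prodf_neq0 => i _; apply: nz.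
set P := fun k => qpoch (Q ^+ 2) Q k / (z ^+ k * qpoch b Q k).
suff H : forall k, pjac_pair Q b Q (z + z^-1) k.+1 = (P k, P k.+1).
  case: n => [|n]; first by rewrite /pjac /P /= /qpoch !big_ord0 mulr1 divr1.
  by rewrite /pjac H.
elim => [|k IH].
  rewrite /= /P /qpoch !big_ord1 !big_ord0.
  rewrite mulr0 subr0 !expr0 !mulr1 expr1 divr1; congr pair.
  rewrite hQ; field; rewrite z0 andbT; move: (nz 0%N); by rewrite expr0 mulr1.
rewrite [LHS]pjac_pairS IH; congr pair.
rewrite /gammat /P !qpochS.
have -> : (k.+1%:Z - 1 = k%:Z)%R by rewrite -addn1 PoszD addrK.
change (Q ^ k) with (Q ^+ k); change (Q ^ k.+1) with (Q ^+ k.+1).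
rewrite (exprS Q k) (exprS z k.+1) (exprS z k).
move: (nz k) (nz k.+1) (zn k) (Bn k); rewrite (exprS Q k).
set A := qpoch (Q^+2) Q k; set B := qpoch b Q k; set u := Q ^+ k; set zk := z ^+ k.
move=> h1 h2 zk0 B0.
have e1 : Q*(Q*u) = Q^+2 * u by rewrite mulrA expr2.
have e2 : Q^+2 * (Q*u) = Q * (b*(1+z^+2) - z^+2) * u.
  by rewrite -hQ; rewrite mulrA [Q^+2 * Q]mulrC.
rewrite e1 e2 hQ.
field.
by rewrite z0 zk0 B0 h1 h2.
Qed.
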